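(* Let $q\ge2$, $n\ge1$, $m=n+1$ and $R\in[m]$. Then $$\min_{{\boldsymbol y}\in\Sigma_{q,R}^m}\mathsf{H}^{\mathsf{In}}_{1\text{-}\mathsf{Ins}}({\boldsymbol y})=\log_2 m-\frac{(m-R+1)\log_2(m-R+1)}{m},$$ and the minimum is attained only by skewed channel outputs.
   Context: $\Sigma_q=\{0,\dots,q-1\}$. For sequences ${\boldsymbol x}$ of length $\ell$ and ${\boldsymbol y}$ of length $N\ge\ell$, $\omega_{{\boldsymbol x}}({\boldsymbol y})$ is the number of index tuples $1\le i_1<\dots<i_\ell\le N$ with $y_{i_j}=x_j$. The $1$-insertion channel with input length $n$ maps ${\boldsymbol x}\in\Sigma_q^n$ to ${\boldsymbol y}\in\Sigma_q^{n+1}$ with probability $\omega_{{\boldsymbol x}}({\boldsymbol y})/((n+1)q)$; under uniform transmission ($X$ uniform on $\Sigma_q^n$), $\mathsf{H}^{\mathsf{In}}_{1\text{-}\mathsf{Ins}}({\boldsymbol y})=H(X\mid Y={\boldsymbol y})$ in bits, with posterior $P({\boldsymbol x}\mid {\boldsymbol y})=\Pr\{{\boldsymbol y}\mid{\boldsymbol x}\}/\sum_{{\boldsymbol x}'}\Pr\{{\boldsymbol y}\mid{\boldsymbol x}'\}$. A run is a maximal block of identical consecutive symbols; $\Sigma_{q,R}^m$ is the set of sequences in $\Sigma_q^m$ with exactly $R$ runs. A sequence in $\Sigma_{q,R}^m$ is skewed if it has $R-1$ runs of length one and one run of length $m-(R-1)$. *)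

(* Defs.v *)
From HB Require Import structures.
From mathcomp Require Import all_boot all_order all_algebra.
From mathcomp Require Import all_classical all_reals exp.
Set Implicit Arguments. Unset Strict Implicit. Unset Printing Implicit Defensive.
Import Order.TTheory GRing.Theory Num.Theory.
Local Open Scope ring_scope.

Definition log2 {R : realType} (t : R) : R := ln t / ln 2.

(* omega_x(y): number of index tuples i_1<...<i_l with y_{i_j} = x_j,
   i.e. number of selection masks b (one bit per position of y) whose
   selected subsequence of y equals x. *)
Definition omega {T : eqType} (N : nat) (x : seq T) (y : N.-tuple T) : nat :=
  #|[pred b : N.-tuple bool | mask b y == x]|.

Definition ins_prob {R : realType} (q n : nat)
  (x : n.-tuple 'I_q) (y : n.+1.-tuple 'I_q) : R :=
  (omega x y)%:R / (n.+1 * q)%:R.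

(* posterior P(x | y) under uniform input X on Sigma_q^n *)
Definition posterior {R : realType} (q n : nat)
  (y : n.+1.-tuple 'I_q) (x : n.-tuple 'I_q) : R :=
  ins_prob x y / \sum_(x' : n.-tuple 'I_q) ins_prob x' y.

Definition H_in_ins {R : realType} (q n : nat) (y : n.+1.-tuple 'I_q) : R :=
  - \sum_(x : n.-tuple 'I_q)
      (let p := posterior y x in if p == 0 then 0 else p * log2 p).

Fixpoint runs {T : eqType} (s : seq T) : seq (seq T) :=
  match s with
  | [::] => [::]
  | x :: t =>
      match runs t with
      | (y :: b) :: bs =>
          if x == y then (x :: y :: b) :: bs else [:: x] :: (y :: b) :: bs
      | _ => [:: [:: x]]
      end
  end.

Definition nruns {T : eqType} (s : seq T) : nat := size (runs s).

Definition skewed {T : eqType} (R : nat) (s : seq T) : Prop :=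
  perm_eq (map size (runs s)) ((size s - (R - 1))%N :: nseq (R - 1) 1%N).

(* Main.v *)
Require Import Defs.
From HB Require Import structures.
From mathcomp Require Import all_boot all_order all_algebra.
From mathcomp Require Import all_classical all_reals exp.
From mathcomp Require Import ring lra zify.
Import Order.TTheory GRing.Theory Num.Theory.
Local Open Scope ring_scope.
From mathcomp Require Import zify.
Section Real.
Variable RR : realType.

Lemma L1 (u : RR) : 0 < u -> u * (ln (u + 1) - ln u) <= 1.
Proof.
move=> u0.
have u10 : 0 < u + 1 by lra.
rewrite -ln_div ?posrE //.
have -> : (u + 1) / u = 1 + u^-1 by rewrite mulrDl divff ?gt_eqF // mul1r.
have ui : 0 < u^-1 by rewrite invr_gt0.
have : ln (1 + u^-1) <= u^-1 by apply: le_ln1Dx; lra.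
move=> h; have := ler_wpM2l (ltW u0) h; rewrite divff ?gt_eqF //.
Qed.

Lemma L2 (u : RR) : 0 < u -> 1 <= (u + 1) * (ln (u + 1) - ln u).
Proof.
move=> u0.
have u10 : 0 < u + 1 by lra.
have ui : 0 < (u+1)^-1 by rewrite invr_gt0.
have ui1 : (u+1)^-1 < 1 by rewrite invf_lt1 //; lra.
have -> : ln (u + 1) - ln u = - ln (u / (u+1)).
  by rewrite ln_div ?posrE //; lra.
have -> : u / (u+1) = 1 + - (u+1)^-1.
  have hn : u + 1 != 0 by rewrite gt_eqF.
  apply: (mulIf hn); rewrite mulfVK // mulrDl mulNr mulVf //; lra.
have : ln (1 + - (u+1)^-1) <= - (u+1)^-1 by apply: le_ln1Dx; lra.
move=> h.
have h2 : (u+1)^-1 <= - ln (1 + - (u + 1)^-1) by lra.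
have := ler_wpM2l (ltW u10) h2; rewrite divff ?gt_eqF //.
Qed.

Definition phi (k : nat) : RR := k%:R * ln (k%:R).

Lemma phi0 : phi 0 = 0. Proof. by rewrite /phi mul0r. Qed.
Lemma phi1 : phi 1 = 0. Proof. by rewrite /phi ln1 mulr0. Qed.

Lemma alg {K a b c d l : RR} : 0 < K -> 1 <= (K+1+1)*(c-b) ->
  (2*K)*(d-(l+a)) <= 1 -> (2*K+1)*((l+b)-d) <= 1 -> 1 <= (2*K+1+1)*((l+b)-d) ->
  2*((K+1)*b) < K*a + (K+1+1)*c.
Proof.
move=> K0 X1 Y1 Y2 Y3.
have Yp : 0 < l + b - d.
  have : 0 < (2 * K + 1 + 1) * (l + b - d) by lra.
  by rewrite pmulr_rgt0 //; lra.
lra.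
Qed.

Lemma phi_conv (k : nat) : 2 * phi k.+1 < phi k + phi k.+2.
Proof.
case: k => [|k].
  rewrite phi0 phi1 mulr0 add0r /phi; apply: mulr_gt0; first by rewrite ltr0n.
  by apply: ln_gt0; rewrite ltr1n.
rewrite /phi.
set K : RR := k.+1%:R.
have K0 : 0 < K by rewrite ltr0n.
have e1 : (k.+2%:R : RR) = K + 1 by rewrite /K natr1.
have e2 : (k.+3%:R : RR) = K + 1 + 1 by rewrite /K !natr1.
rewrite e1 e2.
set a := ln K; set b := ln (K+1); set c := ln (K+1+1).
have K10 : 0 < K + 1 by lra.
have X1 := L2 _ K10.
have K2 : 0 < 2 * K by lra.
have K3 : 0 < 2 * K + 1 by lra.
have Y1 := L1 _ K2. have Y2 := L1 _ K3. have Y3 := L2 _ K3.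
have l2 : 0 < (2 : RR) by lra.
have E1 : ln (2 * K) = ln 2 + a by rewrite lnM ?posrE.
have E2 : ln (2 * K + 1 + 1) = ln 2 + b.
  by rewrite -lnM ?posrE //; congr ln; lra.
rewrite E1 E2 in Y1 Y2 Y3.
exact: (alg K0 X1 Y1 Y2 Y3).
Qed.

Lemma phi_step j k : (j < k)%N -> phi j.+1 - phi j < phi k.+1 - phi k.
Proof.
elim: k => [//|k IH]; rewrite ltnS leq_eqVlt => /orP[/eqP->|/IH h].
  have := phi_conv k; lra.
have := phi_conv k; lra.
Qed.

Lemma phi_stepW j k : (j <= k)%N -> phi j.+1 - phi j <= phi k.+1 - phi k.
Proof.
rewrite leq_eqVlt => /orP[/eqP->//|/phi_step h]; exact: ltW.
Qed.

Lemma phi_two a b : phi a.+1 + phi b.+1 <= phi (a + b).+1.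
Proof.
elim: b => [|b IH]; first by rewrite phi1 addr0 addn0.
have := phi_stepW _ _ (leq_addl a b.+1).
rewrite addnS; lra.
Qed.

Lemma phi_two_lt a b : (0 < a)%N -> phi a.+1 + phi b.+2 < phi (a + b).+2.
Proof.
move=> a0; have := phi_two a b.
have : (b.+1 < (a + b).+1)%N by rewrite ltnS -{1}(add0n b) ltn_add2r.
move/phi_step; lra.
Qed.

Definition ex (L : seq nat) := sumn (map predn L).

Lemma list_le {L} : all (leq 1) L -> \sum_(r <- L) phi r <= phi (ex L).+1.
Proof.
elim: L => [|a L IH]; first by rewrite big_nil phi1.
case: a => [//|a] /= /IH h; rewrite big_cons /ex /= -/(ex L).
have := phi_two a (ex L); lra.
Qed.

Lemma ex_pos {L} : all (leq 1) L -> (0 < count (leq 2) L)%N -> (0 < ex L)%N.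
Proof.
elim: L => [//|[//|[|a]] L IH] /= /IH h; rewrite /ex /= -/(ex L) //.
Qed.

Lemma list_lt {L} : all (leq 1) L -> (1 < count (leq 2) L)%N ->
  \sum_(r <- L) phi r < phi (ex L).+1.
Proof.
elim: L => [//|a L IH].
case: a => [//|[|a]] /= aL; rewrite big_cons /ex /= -/(ex L).
  by rewrite add0n phi1 add0r => /(IH aL).
rewrite add1n ltnS => c1.
have := ex_pos aL c1; case E: (ex L) => [//|e] _.
have := list_le aL; rewrite E => h.
have := phi_two_lt a.+1 e erefl; rewrite addnS; lra.
Qed.

End Real.

Lemma sumn_ex {L} : all (leq 1) L -> sumn L = (ex L + size L)%N.
Proof.
elim: L => [//|[//|a] L IH] /= /IH ->; rewrite /ex /= -/(ex L); lia.
Qed.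


Lemma ones {L} : all (leq 1) L -> count (leq 2) L = 0%N -> L = nseq (size L) 1%N.
Proof.
elim: L => [//|[//|[|a]] L IH] //= /IH h; rewrite add0n => /h <- //.
Qed.

Lemma skew_of {L} : all (leq 1) L -> (count (leq 2) L <= 1)%N -> L != [::] ->
  perm_eq L ((sumn L - (size L - 1))%N :: nseq (size L - 1)%N 1%N).
Proof.
elim: L => [//|[//|[|a]] L IH] /= aL.
  rewrite add0n => cL _.
  case: L IH aL cL => [|b L] IH aL cL; first by [].
  have := IH aL cL isT; rewrite /= subn1 /= => P.
  have -> : (1 + (b + sumn L) - (size L).+1 = b + sumn L - size L)%N.
    have := sumn_ex aL; rewrite /=; lia.
  have P1 : perm_eq (1%N :: b :: L) (1%N :: (b + sumn L - size L)%N :: nseq (size L) 1%N) by rewrite perm_cons.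
  apply: (perm_trans P1).
  by rewrite -[1%N :: _]/([:: 1%N] ++ [:: _] ++ _) perm_catCA.
rewrite add1n ltnS leqn0 => /eqP c0 _.
rewrite (ones aL c0) size_nseq subn1 /= sumn_nseq mul1n addnK.
by rewrite -(ones aL c0).
Qed.

Section Comb.
Context {T : eqType}.

Fixpoint delmask (j n : nat) : seq bool :=
  match n with
  | 0 => [::]
  | n'.+1 => if j is j'.+1 then true :: delmask j' n' else false :: nseq n' true
  end.

Definition del (j : nat) (s : seq T) := mask (delmask j (size s)) s.

Lemma del0 x t : del 0 (x :: t) = t.
Proof. by rewrite /del /= mask_true. Qed.

Lemma delS j x t : del j.+1 (x :: t) = x :: del j t.
Proof. by []. Qed.

Definition cnt (s : seq T) (i : nat) : nat :=
  \sum_(0 <= j < size s) (del j s == del i s).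

Lemma runs_cons (x : T) t : exists b bs, runs (x :: t) = (x :: b) :: bs.
Proof.
rewrite /=; case: (runs t) => [|[|y b] bs]; try by exists [::], [::].
by case: ifP => _; [exists (y :: b), bs | exists [::], ((y :: b) :: bs)].
Qed.

Lemma cnt_eq t i : del i t == del 0 t -> cnt t i = cnt t 0.
Proof. by move=> /eqP h; rewrite /cnt; apply: eq_bigr => j _; rewrite h. Qed.

Lemma cntS_ne x y t i : x != y ->
  cnt (x :: y :: t) i.+1 = cnt (y :: t) i.
Proof.
move=> xy; rewrite /cnt /= big_nat_recl //= del0 delS.
rewrite eqseq_cons eq_sym (negbTE xy) /= add0n.
by apply: eq_bigr => j _; rewrite !delS eqseq_cons eqxx.
Qed.

Lemma cnt0_ne x y t : x != y -> cnt (x :: y :: t) 0 = 1%N.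
Proof.
move=> xy; rewrite /cnt /= big_nat_recl //= eqxx big1 // => j _.
by rewrite del0 delS eqseq_cons (negbTE xy).
Qed.

Lemma cntS_eq x t i :
  cnt (x :: x :: t) i.+1 = ((del 0 (x :: t) == del i (x :: t)) + cnt (x :: t) i)%N.
Proof.
rewrite /cnt /= big_nat_recl //=; congr (_ + _)%N.
  by rewrite del0 delS eqseq_cons eqxx /= del0 eq_sym.
by apply: eq_bigr => j _; rewrite !delS eqseq_cons eqxx.
Qed.

Lemma cnt0_eq x t : cnt (x :: x :: t) 0 = (cnt (x :: t) 0).+1.
Proof.
rewrite /cnt /= big_nat_recl //= eqxx add1n; congr _.+1.
by apply: eq_bigr => j _; rewrite del0 delS eqseq_cons eqxx /= del0.
Qed.

End Comb.

Lemma runs_step (T : eqType) (x : T) t : runs (x :: t) =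
  match runs t with
  | (y :: b) :: bs =>
      if x == y then (x :: y :: b) :: bs else [:: x] :: (y :: b) :: bs
  | _ => [:: [:: x]]
  end.
Proof. by []. Qed.

Section Main.
Variable RR : realType.
Variable T : eqType.

Lemma runs_main (x : T) t :
  cnt (x :: t) 0 = size (head [::] (runs (x :: t))) /\
  \sum_(0 <= i < (size t).+1) ln ((cnt (x :: t) i)%:R : RR)
    = \sum_(r <- runs (x :: t)) phi RR (size r).
Proof.
elim: t x => [|y t IH] x.
  have c1 : cnt [:: x] 0 = 1%N by rewrite /cnt big_nat1 eqxx.
  by rewrite big_nat1 c1 /= big_seq1 phi1 ln1.
have [a' [bs Hr]] := runs_cons y t.
have [IH1 IH2] := IH y; rewrite Hr /= in IH1 IH2.
rewrite runs_step Hr.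
case: eqVneq IH1 IH2 => [<-|xy] IH1 IH2.
  rewrite cnt0_eq IH1; split=> //.
  rewrite big_nat_recl //= cnt0_eq IH1.
  set t1 := x :: t in IH1 IH2 *.
  set A := (size a').+1 in IH1 *.
  have E : forall i, ln (cnt (x :: t1) i.+1)%:R =
      ln ((cnt t1 i)%:R : RR) + (del 0 t1 == del i t1)%:R * (ln (A.+1%:R) - ln (A%:R)).
    move=> i; rewrite cntS_eq; case h: (del 0 t1 == del i t1) => /=.
      by rewrite cnt_eq ?(eq_sym (del i t1)) // IH1 mul1r add1n; lra.
    by rewrite add0n mul0r addr0.
  rewrite (eq_bigr _ (fun i _ => E i)) big_split /= IH2 -mulr_suml.
  rewrite -natr_sum.
  have -> : (\sum_(0 <= i < (size t).+1) (del 0 t1 == del i t1))%N = A.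
    by rewrite -IH1 /cnt; apply: eq_bigr => i _; rewrite eq_sym.
  rewrite !big_cons /phi /= /A.
  have e : ((size a').+2%:R : RR) = (size a').+1%:R + 1 by rewrite natr1.
  rewrite e mulrDl mul1r; lra.
rewrite cnt0_ne //; split=> //.
rewrite big_nat_recl //= cnt0_ne // ln1 add0r.
under eq_bigr => i _ do rewrite cntS_ne //.
by rewrite IH2 [RHS]big_cons /= phi1 add0r.
Qed.
End Main.

Lemma size_delmask j n : size (delmask j n) = n.
Proof. by elim: n j => [|n IH] [|j] //=; rewrite ?size_nseq ?IH. Qed.

Lemma count_delmask j n : (j < n)%N -> count id (delmask j n) = n.-1.
Proof.
elim: n j => [|n IH] [|j] //= h.
  by rewrite count_nseq mul1n.
by rewrite (IH _ h) add1n; case: n {IH} h.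
Qed.

Lemma index_delmask j n : (j < n)%N -> index false (delmask j n) = j.
Proof. by elim: n j => [|n IH] [|j] //= /IH ->. Qed.

Lemma count_all_true (b : seq bool) : count id b = size b -> b = nseq (size b) true.
Proof.
elim: b => [//|[] b IH] /=; first by rewrite add1n => -[] /IH {1}->.
by rewrite add0n => h; have := count_size id b; rewrite h ltnn.
Qed.

Lemma delmask_index {b : seq bool} : (count id b).+1 = size b ->
  b = delmask (index false b) (size b).
Proof.
elim: b => [//|[] b IH] /=.
  by rewrite add1n => -[] /IH {1}->.
by rewrite add0n => -[] /count_all_true {1}->.
Qed.

Lemma index_false_lt {b : seq bool} : (count id b).+1 = size b ->
  (index false b < size b)%N.
Proof.
move=> h; rewrite index_mem; apply/negP => nf.
have : all id b by apply/allP => z zb; case: z zb nf => // ->.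
by rewrite all_count -h => /eqP; lia.
Qed.

Section Chan.
Context {T : eqType}.

Lemma size_del j (s : seq T) : (j < size s)%N -> size (del j s) = (size s).-1.
Proof. by move=> h; rewrite /del size_mask ?size_delmask // count_delmask. Qed.

Lemma omega_del n (x : seq T) (y : n.+1.-tuple T) : size x = n ->
  omega x y = (\sum_(j < n.+1) (del j y == x))%N.
Proof.
move=> sx.
pose g (j : 'I_n.+1) : n.+1.-tuple bool :=
  @Tuple n.+1 bool (delmask j n.+1) (introT eqP (size_delmask j n.+1)).
have ginj : injective g.
  move=> j k /(congr1 val) /= /(congr1 (index false)).
  by rewrite !index_delmask // => /val_inj.
have -> : (\sum_(j < n.+1) (del j y == x) = #|[set j : 'I_n.+1 | del j y == x]|)%N.
  by rewrite -sum1_card [RHS]big_mkcond; apply: eq_bigr => j _; rewrite inE; case: (_ == _).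
rewrite /omega -(card_imset _ ginj); apply: eq_card => b; rewrite inE /=.
have sy : size y = n.+1 by rewrite size_tuple.
apply/idP/imsetP.
  move=> /eqP hb.
  have cb : (count id b).+1 = size b.
    have : size (mask b y) = count id b by rewrite size_mask // !size_tuple.
    by rewrite hb sx size_tuple => <-.
  have il := index_false_lt cb; rewrite size_tuple in il.
  have hbd : val b = delmask (index false b) n.+1.
    by have := delmask_index cb; rewrite size_tuple.
  exists (Ordinal il); first by rewrite inE /del sy /= -hbd hb.
  by apply: val_inj => /=; rewrite -hbd.
case=> j; rewrite inE => hj -> /=.
by move: hj; rewrite /del sy.
Qed.
End Chan.

Lemma runs_facts {T : eqType} (s : seq T) :
  all (leq 1) (map size (runs s)) /\ sumn (map size (runs s)) = size s.
Proof.
elim: s => [//|x t [IH1 IH2]].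
rewrite runs_step; move: IH1 IH2.
case: (runs t) => [|[|y b] bs] //=.
  by move=> _ <-.
by case: eqVneq => _ /= h <-.

Qed.

Lemma runs_nil {T : eqType} (s : seq T) : s != [::] -> runs s != [::].
Proof. by case: s => // x t _; have [b [bs ->]] := runs_cons x t. Qed.

Section Ent.
Variable RR : realType.
Variables (q n : nat).
Variable y : n.+1.-tuple 'I_q.

Let W (x : n.-tuple 'I_q) : nat := omega x y.

Lemma sy : size y = n.+1. Proof. by rewrite size_tuple. Qed.

Lemma size_dely {j} : (j < n.+1)%N -> size (del j y) == n.
Proof. by move=> h; rewrite size_del sy. Qed.

Lemma W_del x : W x = (\sum_(j < n.+1) (del j y == x))%N.
Proof. by rewrite /W omega_del // size_tuple. Qed.

Lemma sum_tuple_one (j : 'I_n.+1) (F : n.-tuple 'I_q -> RR) :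
  \sum_(x : n.-tuple 'I_q) (del j y == x)%:R * F x = F (Tuple (size_dely (ltn_ord j))).
Proof.
rewrite (bigD1 (Tuple (size_dely (ltn_ord j)))) //= eqxx mul1r big1 ?addr0 //.
move=> x nx; case: eqP => [h|_]; last by rewrite mul0r.
by case/negP: nx; apply/eqP/val_inj.
Qed.

Lemma Wsum : \sum_(x : n.-tuple 'I_q) ((W x)%:R : RR) = n.+1%:R.
Proof.
under eq_bigr => x _ do rewrite W_del natr_sum.
rewrite exchange_big /=.
have one : forall j : 'I_n.+1, \sum_(x : n.-tuple 'I_q) (((del j y == x) : nat)%:R : RR) = 1.
  move=> j; have := sum_tuple_one j (fun _ => 1).
  by under eq_bigr => x _ do rewrite mulr1.
under eq_bigr => j _ do rewrite one.
by rewrite sumr_const card_ord.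
Qed.

Lemma W_tuple (j : 'I_n.+1) : W (Tuple (size_dely (ltn_ord j))) = cnt y j.
Proof.
rewrite W_del /cnt sy big_mkord; apply: eq_bigr => k _ //.
Qed.

Lemma cnt_pos (j : 'I_n.+1) : (0 < cnt y j)%N.
Proof.
by rewrite /cnt sy big_mkord (bigD1 j) //= eqxx.
Qed.

Lemma post_eq x : (0 < q)%N -> posterior y x = (W x)%:R / (n.+1%:R : RR).
Proof.
move=> q0; rewrite /posterior /ins_prob -mulr_suml.
have -> : \sum_(i : n.-tuple 'I_q) ((omega i y)%:R : RR) = n.+1%:R by exact: Wsum.
have h1 : ((n.+1 * q)%:R : RR) != 0 by rewrite pnatr_eq0 muln_eq0 negb_or /= -lt0n q0.
have h2 : (n.+1%:R : RR) != 0 by rewrite pnatr_eq0.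
by rewrite /W invf_div mulrA divfK.
Qed.


Lemma H_formula : (0 < q)%N -> H_in_ins y =
  log2 (n.+1%:R : RR) - (\sum_(j < n.+1) ln ((cnt y j)%:R : RR)) / (n.+1%:R * ln 2).
Proof.
move=> q0; rewrite /H_in_ins.
set M : RR := n.+1%:R.
have M0 : 0 < M by rewrite ltr0n.
pose f := fun k : nat => let p := (k%:R / M) in if p == 0 then 0 else p * log2 p.
have E1 : forall x, (let p := posterior y x in if p == 0 then 0 else p * log2 p) = f (W x).
  by move=> x; rewrite post_eq.
rewrite (eq_bigr _ (fun x _ => E1 x)).
have E2 : forall x, f (W x) = \sum_(j < n.+1) (del j y == x)%:R * (f (W x) / (W x)%:R).
  move=> x; rewrite -mulr_suml -natr_sum -W_del.
  case: (eqVneq (W x) 0%N) => [->|wn0].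
    by rewrite /f /= mul0r eqxx mul0r.
  by rewrite mulrC divfK // pnatr_eq0.
rewrite (eq_bigr _ (fun x _ => E2 x)) exchange_big /=.
rewrite (eq_bigr (fun j : 'I_n.+1 => f (cnt y j) / (cnt y j)%:R)); last first.
  by move=> j _; rewrite sum_tuple_one W_tuple.
have L20 : 0 < ln (2 : RR) by apply: ln_gt0; rewrite ltr1n.
have E3 : forall j : 'I_n.+1, f (cnt y j) / (cnt y j)%:R =
    ln ((cnt y j)%:R) / (M * ln 2) - ln M / (M * ln 2).
  move=> j; have c0 : 0 < ((cnt y j)%:R : RR) by rewrite ltr0n cnt_pos.
  rewrite /f /=.
  have -> : ((cnt y j)%:R / M == 0) = false.
    by apply/negbTE; rewrite mulf_neq0 ?invr_eq0 ?gt_eqF.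
  rewrite /log2 ln_div ?posrE //.
  set c := (cnt y j)%:R.
  have cn : c != 0 by rewrite gt_eqF.
  have Mn : M != 0 by rewrite gt_eqF.
  have Ln : ln (2:RR) != 0 by rewrite gt_eqF.
  have P1 : (1 + n%:R : RR) != 0.
    by have := ler0n RR n; rewrite gt_eqF //; lra.
  by field; rewrite Ln P1 cn.
rewrite (eq_bigr _ (fun j _ => E3 j)) sumrB sumr_const card_ord -mulr_suml.
rewrite -[ln M / _ *+ _]mulr_natl /log2.
set S := \sum_(i < n.+1) _.
have Mn : M != 0 by rewrite gt_eqF.
have Ln : ln (2:RR) != 0 by rewrite gt_eqF.
have P1 : (1 + n%:R : RR) != 0.
  by have := ler0n RR n; rewrite gt_eqF //; lra.
rewrite -/M; field; by rewrite Ln P1.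
Qed.

End Ent.

Lemma S_runs (RR : realType) q n (y : n.+1.-tuple 'I_q) :
  \sum_(j < n.+1) ln ((cnt y j)%:R : RR) = \sum_(l <- map size (runs y)) phi RR l.
Proof.
rewrite big_map.
have sy := size_tuple y.
case E: (tval y) sy => [//|x t] [st].
rewrite -(big_mkord xpredT (fun j => ln ((cnt (x :: t) j)%:R : RR))) -st.
by have [_ <-] := runs_main RR _ x t.
Qed.

Section Alt.
Context {T : eqType}.
Variables (a b : T).
Hypothesis ab : a != b.

Fixpoint alt (s k : nat) : seq T :=
  if k is k'.+1 then (if odd k then b else a) :: alt s k' else nseq s a.

Lemma size_alt s k : size (alt s k) = (s + k)%N.
Proof. by elim: k => [|k IH] /=; rewrite ?size_nseq ?addn0 ?IH ?addnS. Qed.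

Lemma runs_nseq s : runs (nseq s.+1 a) = [:: nseq s.+1 a].
Proof. by elim: s => [//|s IH]; rewrite [nseq _ _]/= runs_step IH /= eqxx. Qed.

Lemma alt_head s k : exists t, alt s.+1 k = (if odd k then b else a) :: t.
Proof. by case: k => [|k] /=; [exists (nseq s a) | exists (alt s.+1 k)]. Qed.

Lemma runs_alt s k : map size (runs (alt s.+1 k)) = rcons (nseq k 1%N) s.+1.
Proof.
elim: k => [|k IH]; first by rewrite -[alt _ 0]/(nseq s.+1 a) runs_nseq /= size_nseq.
have [t Ht] := alt_head s k.
have [c [cs Hc]] := runs_cons (if odd k then b else a) t.
rewrite [alt _ _]/= Ht runs_step Hc.
have -> : ((if odd k.+1 then b else a) == (if odd k then b else a)) = false.
  by rewrite /=; case: (odd k) => /=; rewrite ?(negbTE ab) // eq_sym (negbTE ab).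
by rewrite /= -IH Ht Hc.
Qed.
End Alt.

Theorem lemma10 (RR : realType) (q n r : nat) :
  (2 <= q)%N -> (1 <= n)%N -> (1 <= r <= n.+1)%N ->
  let m := n.+1 in
  let v : RR := log2 (m%:R : RR)
               - ((m - r + 1)%N%:R * log2 ((m - r + 1)%N%:R : RR)) / m%:R in
  [/\ (forall y : m.-tuple 'I_q, nruns y = r -> v <= H_in_ins y),
      (exists y : m.-tuple 'I_q, nruns y = r /\ H_in_ins y = v) &
      (forall y : m.-tuple 'I_q, nruns y = r -> H_in_ins y = v -> skewed r y)].
Proof.
move=> q2 n1 /andP[r1 rm] m v.
have q0 : (0 < q)%N by apply: leq_trans q2.
have L20 : 0 < ln (2:RR) by apply: ln_gt0; rewrite ltr1n.
set k := (m - r + 1)%N.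
set M : RR := m%:R.
have M0 : 0 < M by rewrite ltr0n.
have vv : v = log2 M - phi RR k / (M * ln 2).
  rewrite /v /log2 /phi -/M -/k.
  have Mn : M != 0 by rewrite gt_eqF.
  have Ln : ln (2:RR) != 0 by rewrite gt_eqF.
  by rewrite invfM !mulrA mulrAC.
have key : forall y : m.-tuple 'I_q, nruns y = r ->
   [/\ H_in_ins y = log2 M - (\sum_(l <- map size (runs y)) phi RR l) / (M * ln 2),
       all (leq 1) (map size (runs y)), sumn (map size (runs y)) = m,
       size (map size (runs y)) = r & (ex (map size (runs y))).+1 = k].
  move=> y ry.
  have [a1 s1] := runs_facts y.
  rewrite size_tuple in s1.
  have sz : size (map size (runs y)) = r by rewrite size_map.
  split => //.
  - by rewrite (H_formula _ _ _ y q0) S_runs.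
  - have := sumn_ex a1; rewrite s1 sz /k; lia.
have c0 : 0 < (M * ln (2:RR))^-1 by rewrite invr_gt0 mulr_gt0.
split.
- move=> y ry; have [-> a1 s1 sz ek] := key y ry.
  have := list_le RR a1; rewrite ek => h.
  have := ler_wpM2r (ltW c0) h; rewrite vv; lra.
- have ab : (Ordinal q0 : 'I_q) != Ordinal q2 by [].
  have sza : size (alt (Ordinal q0) (Ordinal q2) (m - r).+1 (r - 1)) == m.
    by rewrite size_alt; apply/eqP; rewrite /m in rm *; lia.
  pose y0 : m.-tuple 'I_q := Tuple sza.
  have R0 : map size (runs y0) = rcons (nseq (r - 1) 1%N) (m - r).+1 by apply: runs_alt.
  have ry : nruns y0 = r.
    by rewrite /nruns -(size_map size) R0 size_rcons size_nseq; lia.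
  exists y0; split => //.
  have [-> _ _ _ _] := key y0 ry.
  rewrite vv R0 -cats1 big_cat big_seq1 /= big1_seq ?add0r.
    by have -> : (m - r).+1 = k by rewrite /k addn1.
  by move=> i /andP[_]; rewrite mem_nseq => /andP[_ /eqP ->]; rewrite phi1.
- move=> y ry Hv; have [H1 a1 s1 sz ek] := key y ry.
  rewrite H1 vv in Hv.
  have Se : \sum_(l <- map size (runs y)) phi RR l = phi RR k.
    have Hv' : (\sum_(l <- map size (runs y)) phi RR l) * (M * ln 2)^-1 =
               phi RR k * (M * ln 2)^-1 by lra.
    by move: Hv'; apply: mulIf; rewrite gt_eqF.
  have cL : (count (leq 2) (map size (runs y)) <= 1)%N.
    rewrite leqNgt; apply/negP => /(list_lt RR a1); rewrite ek Se; lra.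
  have ne : map size (runs y) != [::] by rewrite -size_eq0 sz -lt0n.
  have := skew_of a1 cL ne.
  by rewrite s1 sz /skewed size_tuple.
Qed.
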